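(* Let $\mathbf{A}=(A,<^{\mathbf{A}},P_1^{\mathbf{A}},P_2^{\mathbf{A}})\in\mathcal{P}_2$. Then the tournament $p(\mathbf{A})$ is isomorphic to an induced subtournament of $\mathbf{S}(2)$.
   Context: $\mathcal{P}_2$ is the class of finite structures $(A,<^{\mathbf{A}},P_1^{\mathbf{A}},P_2^{\mathbf{A}})$ with $<^{\mathbf{A}}$ a linear order on $A$ and $(P_1^{\mathbf{A}},P_2^{\mathbf{A}})$ a partition of $A$. Writing $a\sim b$ when $a,b$ lie in the same part, $p(\mathbf{A})$ is the tournament on $A$ with an arc from $a$ to $b$ iff either ($a\sim b$ and $a<^{\mathbf{A}}b$) or ($a\not\sim b$ and $b<^{\mathbf{A}}a$). $\mathbf{S}(2)$ is the tournament whose vertices are the points of the unit circle of $\mathbb{C}$ with rational argument, with an arc from $x$ to $y$ iff $0<\arg(y/x)<\pi$. *)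

(* Defs.v *)
From Stdlib Require Import Reals QArith List.
From Coquelicot Require Import Coquelicot.
Open Scope R_scope.

Record P2_struct : Type := {
  carrier :> Type;
  lt : carrier -> carrier -> Prop;
  P1 : carrier -> Prop;
  P2 : carrier -> Prop;
  finite : exists l : list carrier, forall x, In x l;
  lt_irrefl : forall x, ~ lt x x;
  lt_trans : forall x y z, lt x y -> lt y z -> lt x z;
  lt_total : forall x y, x <> y -> lt x y \/ lt y x;
  part_cover : forall x, P1 x \/ P2 x;
  part_disj : forall x, ~ (P1 x /\ P2 x)
}.

Definition same_part (A : P2_struct) (a b : A) : Prop :=
  (P1 A a /\ P1 A b) \/ (P2 A a /\ P2 A b).

Definition p_arc (A : P2_struct) (a b : A) : Prop :=
  (same_part A a b /\ lt A a b) \/ (~ same_part A a b /\ lt A b a).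

Definition is_princ_arg (z : C) (theta : R) : Prop :=
  - PI < theta <= PI /\ z = Cmult (RtoC (Cmod z)) (cos theta, sin theta).

Definition S2_pt (z : C) : Prop :=
  Cmod z = 1 /\ exists q : Q, is_princ_arg z (Q2R q).

Definition S2 : Type := { z : C | S2_pt z }.

Definition S2_arc (x y : S2) : Prop :=
  exists theta, is_princ_arg (Cdiv (proj1_sig y) (proj1_sig x)) theta /\ 0 < theta < PI.

(* Main.v *)
Require Import Defs.
From Stdlib Require Import Reals QArith List Qreals ClassicalEpsilon ZArith Lra Lia.
From Coquelicot Require Import Coquelicot.
Open Scope R_scope.

Definition zpt (x : R) : C := (cos x, sin x).

Lemma cs1 x : cos x ^ 2 + sin x ^ 2 = 1.
Proof. rewrite <- (sin2_cos2 x). unfold Rsqr. ring. Qed.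

Lemma Cmod_zpt x : Cmod (zpt x) = 1.
Proof. unfold Cmod, zpt. cbn [fst snd]. rewrite cs1. apply sqrt_1. Qed.

Lemma princ_zpt x : -PI < x <= PI -> is_princ_arg (zpt x) x.
Proof.
  intros H. split; [exact H|]. rewrite Cmod_zpt.
  unfold zpt, Cmult, RtoC. cbn [fst snd]. f_equal; ring.
Qed.

Lemma Cdiv_zpt a b : Cdiv (zpt b) (zpt a) = zpt (b - a).
Proof.
  unfold Cdiv, Cinv, Cmult, zpt. cbn [fst snd]. rewrite cs1.
  rewrite cos_minus, sin_minus. unfold Rdiv. rewrite Rinv_1. f_equal; ring.
Qed.

Lemma arc_char psi : -2*PI < psi < 2*PI ->
  ((exists th, is_princ_arg (zpt psi) th /\ 0 < th < PI) <->
   (0 < psi < PI \/ -2*PI < psi < -PI)).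
Proof.
  intros Hp. pose proof PI_RGT_0. split.
  - intros [th [[Hr He] Ht]].
    rewrite Cmod_zpt in He. unfold zpt, Cmult, RtoC in He. cbn [fst snd] in He.
    assert (Hs : sin psi = sin th) by (injection He; intros; lra).
    assert (Hpos : 0 < sin psi) by (rewrite Hs; apply sin_gt_0; lra).
    destruct (Rlt_or_le psi 0) as [Hn|Hn].
    + destruct (Rlt_or_le psi (-PI)) as [Hm|Hm]; [right; lra|].
      exfalso. assert (0 <= sin (- psi)) by (apply sin_ge_0; lra).
      rewrite sin_neg in H0. lra.
    + destruct (Rlt_or_le psi PI) as [Hm|Hm].
      * left. split; [|lra]. destruct (Req_dec psi 0) as [E|E].
        -- rewrite E, sin_0 in Hpos. lra.
        -- lra.
      * exfalso. assert (0 <= sin (psi - PI)) by (apply sin_ge_0; lra).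
        rewrite sin_minus, sin_PI, cos_PI in H0. lra.
  - intros [H1|H1].
    + exists psi. split; [apply princ_zpt; lra | lra].
    + exists (psi + 2*PI). split; [|lra].
      split; [lra|]. rewrite Cmod_zpt. unfold zpt, Cmult, RtoC. cbn [fst snd].
      rewrite cos_plus, sin_plus, cos_2PI, sin_2PI. f_equal; ring.
Qed.

Lemma index_exists (A : P2_struct) : exists (N : nat) (idx : A -> nat),
  (forall a, (idx a < N)%nat) /\ (forall a b, lt A a b -> (idx a < idx b)%nat).
Proof.
  destruct (finite A) as [l Hl].
  pose (dec := fun x y : A => excluded_middle_informative (x = y)).
  pose (l' := nodup dec l).
  assert (Hnd : NoDup l') by apply NoDup_nodup.
  assert (Hin : forall x, In x l') by (intros x; apply nodup_In, Hl).
  pose (fl := fun a : A => filter (fun x => if excluded_middle_informative (lt A x a) then true else false) l').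
  assert (Hfl : forall a x, In x (fl a) <-> lt A x a).
  { intros a x. unfold fl. rewrite filter_In.
    destruct (excluded_middle_informative (lt A x a)) as [h|h].
    - split; [tauto|]. intros; split; auto.
    - split; [intros [_ H]; discriminate| tauto]. }
  exists (S (length l')), (fun a => length (fl a)). split.
  - intros a. assert (length (fl a) <= length l')%nat; [|lia].
    apply NoDup_incl_length. apply NoDup_filter; exact Hnd.
    intros x _; apply Hin.
  - intros a b Hab.
    change (length (a :: fl a) <= length (fl b))%nat.
    apply NoDup_incl_length.
    + constructor. rewrite Hfl. apply lt_irrefl. apply NoDup_filter; exact Hnd.
    + intros x [<-|Hx]; rewrite Hfl; [exact Hab|].
      rewrite Hfl in Hx. eapply lt_trans; eauto.
Qed.

Lemma S2pt_q (q : Q) : -PI < Q2R q <= PI -> S2_pt (zpt (Q2R q)).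
Proof. intros H. split; [apply Cmod_zpt|]. exists q. apply princ_zpt, H. Qed.

Lemma iff_same (S P Q X : Prop) : S -> (P <-> X) -> ((S /\ P) \/ (~ S /\ Q) <-> X).
Proof. tauto. Qed.
Lemma iff_diff (S P Q X : Prop) : ~ S -> (Q <-> X) -> ((S /\ P) \/ (~ S /\ Q) <-> X).
Proof. tauto. Qed.

Theorem lemma1 (A : P2_struct) :
  exists f : A -> S2,
    (forall a b, f a = f b -> a = b) /\
    (forall a b, p_arc A a b <-> S2_arc (f a) (f b)).
Proof.
  destruct (index_exists A) as [N [idx [Hb Hm]]].
  pose (D := Pos.of_succ_nat N).
  pose (K := (4 * N + 3)%nat).
  pose (q0 := Qmake (up (PI * (INR K + 1))) (Pos.of_succ_nat K)).
  pose (thq := fun a : A => Qmake (Z.of_nat (S (idx a))) D).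
  pose (angq := fun a : A => if excluded_middle_informative (P1 A a) then thq a else (thq a - q0)%Q).
  pose (dl := / (INR N + 1)).
  pose (r := Q2R q0).
  pose (th := fun a => Q2R (thq a)).
  pose proof (pos_INR N) as HN0.
  assert (Hdl1 : dl * (INR N + 1) = 1) by (unfold dl; field; lra).
  assert (Hdl0 : 0 < dl) by (unfold dl; apply Rinv_0_lt_compat; lra).
  assert (HPI : 3 < PI) by (pose proof PI2_3_2; lra).
  assert (Hth : forall a, th a = (INR (idx a) + 1) * dl).
  { intros a. unfold th, thq, Q2R, dl. cbn [Qnum Qden].
    unfold D. rewrite Zpos_P_of_succ_nat, succ_IZR, <- !INR_IZR_INZ, S_INR. reflexivity. }
  assert (F1 : forall a, dl <= th a <= 1 - dl).
  { intros a. rewrite Hth. pose proof (Hb a) as Ha.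
    assert (INR (S (idx a)) <= INR N) by (apply le_INR; lia).
    rewrite S_INR in H. pose proof (pos_INR (idx a)). nra. }
  assert (F2 : forall a b, lt A a b -> th b - th a >= dl).
  { intros a b Hab. rewrite !Hth. pose proof (Hm a b Hab) as Hi.
    assert (INR (S (idx a)) <= INR (idx b)) by (apply le_INR; lia).
    rewrite S_INR in H. nra. }
  assert (F3 : PI < r <= PI + dl / 4).
  { unfold r, q0, Q2R. cbn [Qnum Qden]. rewrite Zpos_P_of_succ_nat, succ_IZR, <- INR_IZR_INZ.
    assert (HK : INR K + 1 = 4 * (INR N + 1)).
    { unfold K. rewrite plus_INR, mult_INR. simpl. lra. }
    rewrite HK. destruct (archimed (PI * (4 * (INR N + 1)))) as [Hu1 Hu2].
    set (u := IZR (up (PI * (4 * (INR N + 1))))) in *.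
    assert (E : u * / (4 * (INR N + 1)) - PI = (u - PI * (4 * (INR N + 1))) * / (4 * (INR N + 1)))
      by (field; lra).
    assert (Hi : 0 < / (4 * (INR N + 1))) by (apply Rinv_0_lt_compat; lra).
    assert (E2 : dl / 4 = / (4 * (INR N + 1))) by (unfold dl; field; lra).
    split.
    - assert (0 < (u - PI * (4 * (INR N + 1))) * / (4 * (INR N + 1)))
        by (apply Rmult_lt_0_compat; lra). lra.
    - assert ((u - PI * (4 * (INR N + 1))) * / (4 * (INR N + 1)) <= 1 * / (4 * (INR N + 1)))
        by (apply Rmult_le_compat_r; lra). lra. }
  assert (Hphi : forall a, (P1 A a /\ Q2R (angq a) = th a) \/
                          (P2 A a /\ ~ P1 A a /\ Q2R (angq a) = th a - r)).
  { intros a. unfold angq. destruct (excluded_middle_informative (P1 A a)) as [h|h].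
    - left; auto.
    - right. destruct (part_cover A a); [contradiction|].
      rewrite Q2R_minus. auto. }
  assert (Hrange : forall a, -PI < Q2R (angq a) <= PI).
  { intros a. pose proof (F1 a). destruct (Hphi a) as [[_ ->]|[_ [_ ->]]]; lra. }
  exists (fun a => exist S2_pt (zpt (Q2R (angq a))) (S2pt_q (angq a) (Hrange a))).
  assert (Hcore : forall a b, p_arc A a b <->
     (0 < Q2R (angq b) - Q2R (angq a) < PI \/ -2*PI < Q2R (angq b) - Q2R (angq a) < -PI)).
  { intros a b.
    assert (Ttri : a = b \/ th b - th a >= dl \/ th b - th a <= - dl).
    { destruct (classic (a = b)) as [e|e]; [left; exact e|].
      destruct (lt_total A a b e) as [h|h]; [right; left; apply F2, h|].
      right; right. pose proof (F2 _ _ h). lra. }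
    assert (Tlt : lt A a b <-> th b - th a > 0).
    { split; intros h; [pose proof (F2 _ _ h); lra|].
      destruct (classic (a = b)) as [e|e]; [subst; lra|].
      destruct (lt_total A a b e) as [h'|h']; [exact h'|].
      pose proof (F2 _ _ h'); lra. }
    assert (Tgt : lt A b a <-> th b - th a < 0).
    { split; intros h; [pose proof (F2 _ _ h); lra|].
      destruct (classic (a = b)) as [e|e]; [subst; lra|].
      destruct (lt_total A a b e) as [h'|h']; [|exact h'].
      pose proof (F2 _ _ h'); lra. }
    unfold p_arc. rewrite Tlt, Tgt.
    pose proof (F1 a); pose proof (F1 b).
    pose proof (part_disj A a); pose proof (part_disj A b).
    destruct (Hphi a) as [[Ha ->]|[Ha [Ha' ->]]];
    destruct (Hphi b) as [[Hb' ->]|[Hb' [Hb'' ->]]].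
    - apply iff_same; [unfold same_part; tauto|]. split; intros; [left; lra|]. destruct H3; lra.
    - assert (a <> b) by (intros <-; tauto).
      apply iff_diff; [unfold same_part; tauto|].
      split; intros; [right; lra|]. destruct H4 as [H4|H4]; [lra|].
      destruct Ttri as [e|[e|e]]; [contradiction|lra|lra].
    - assert (a <> b) by (intros <-; tauto).
      apply iff_diff; [unfold same_part; tauto|].
      destruct Ttri as [e|[e|e]]; [contradiction| |];
      (split; intros; [left; lra|]); destruct H4 as [H4|H4]; lra.
    - apply iff_same; [unfold same_part; tauto|]. split; intros; [left; lra|]. destruct H3; lra. }
  assert (Harc : forall a b, p_arc A a b <->
      S2_arc (exist S2_pt (zpt (Q2R (angq a))) (S2pt_q (angq a) (Hrange a)))
             (exist S2_pt (zpt (Q2R (angq b))) (S2pt_q (angq b) (Hrange b)))).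
  { intros a b. unfold S2_arc. cbn [proj1_sig]. rewrite Cdiv_zpt.
    rewrite arc_char; [apply Hcore|].
    pose proof (Hrange a); pose proof (Hrange b). lra. }
  split; [|exact Harc].
  intros a b Hab. destruct (classic (a = b)) as [e|e]; [exact e|exfalso].
  assert (Hirr : ~ p_arc A a a).
  { unfold p_arc. pose proof (lt_irrefl A a). tauto. }
  assert (Htour : p_arc A a b \/ p_arc A b a).
  { assert (same_part A a b <-> same_part A b a) by (unfold same_part; tauto).
    unfold p_arc. destruct (lt_total A a b e); tauto. }
  destruct Htour as [h|h].
  - pose proof (proj1 (Harc a b) h) as h'. cbv beta in Hab. rewrite <- Hab in h'.
    apply Hirr, Harc, h'.
  - pose proof (proj1 (Harc b a) h) as h'. cbv beta in Hab. rewrite <- Hab in h'.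
    apply Hirr, Harc, h'.
Qed.
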